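(* Let $\gamma\in\Gamma$ and let $C$, $C'$ be ordinary non-singular plane quartics defined over $k$ for which there exist $Q,Q'\in\mathcal{D}_\gamma$ and isomorphisms $\phi:C\to C_Q$, $\phi':C'\to C_{Q'}$ (defined over $\overline{k}$) with $\sigma\phi\circ\phi^{-1}=\gamma=\sigma\phi'\circ\phi'^{-1}$. Then the sets of bitangents $\mathcal{B}$ of $C$ and $\mathcal{B}'$ of $C'$ are $\mathrm{PGL}_3(k)$-equivalent, i.e. there is $\eta\in\mathrm{PGL}_3(k)$ with $\eta(\mathcal{B})=\mathcal{B}'$.
   Context: $k=\mathbb{F}_q$, $q$ a power of 2, $\overline{k}$ an algebraic closure, $\sigma(a)=a^q$ the Frobenius, acting coefficientwise on polynomials and maps. Isomorphisms between non-singular plane quartics are induced by elements of $\mathrm{PGL}_3(\overline{k})$. For $\gamma\in\mathrm{PGL}_3(\overline{k})$ with rows $\ell_1,\ell_2,\ell_3$ and homogeneous $F$, $F^\gamma=F(\ell_1,\ell_2,\ell_3)$. $\mathcal{Q}$ is the set of quadratic forms $Q=ax^2+by^2+cz^2+dxy+eyz+fzx$ over $\overline{k}$ with $abc\ne0$, $a+b+d\ne0$, $b+c+e\ne0$, $a+c+f\ne0$, $a+b+c+d+e+f\ne1$; $C_Q:Q^2=xyz(x+y+z)$. $\Gamma=\mathrm{PGL}_3(\mathbb{F}_2)$; for $\gamma\in\Gamma$ with rows $\ell_i$, $H_\gamma$ is defined by $\ell_1\ell_2\ell_3(\ell_1+\ell_2+\ell_3)=xyz(x+y+z)+H_\gamma^2$,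 $\gamma(Q)=Q^{\gamma^{-1}}+H_{\gamma^{-1}}$ (so $\gamma(C_Q)=C_{\gamma(Q)}$), and $\mathcal{D}_\gamma=\{Q\in\mathcal{Q}:\gamma(Q)=\sigma Q\}$. Ordinary means the Jacobian has 2-rank 3. *)

(* Defs.v *)
From HB Require Import structures.
From mathcomp Require Import all_boot all_order all_algebra.
From mathcomp Require Import mpoly.
Set Implicit Arguments. Unset Strict Implicit. Unset Printing Implicit Defensive.
Import Order.TTheory GRing.Theory.
Local Open Scope ring_scope.

Section Defs.
Variable K : fieldType.

(* K is algebraic over F_2: every element lies in some finite field F_(2^m). *)
Definition algebraic_over_F2 : Prop :=
  forall a : K, exists m : nat, (0 < m)%N /\ a ^+ (2 ^ m) = a.

Definition frob (q : nat) (a : K) : K := a ^+ q.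

Definition in_k (q : nat) (a : K) : Prop := frob q a = a.

Definition sigmaP (q : nat) (F : {mpoly K[3]}) : {mpoly K[3]} :=
  map_mpoly (frob q) F.
Definition sigmaM (q : nat) (M : 'M[K]_3) : 'M[K]_3 := map_mx (frob q) M.

(* F^gamma = F(l_1, l_2, l_3), l_i = sum_j gamma_ij X_j the rows of gamma *)
Definition subst (M : 'M[K]_3) (F : {mpoly K[3]}) : {mpoly K[3]} :=
  F \mPo [tuple \sum_(j < 3) M i j *: 'X_j | i < 3].

Definition linform (a : 'rV[K]_3) : {mpoly K[3]} := \sum_(j < 3) a 0 j *: 'X_j.

Definition form_over_k (q : nat) (F : {mpoly K[3]}) : Prop :=
  forall m, in_k q (F@_m).

Definition nonsingular (F : {mpoly K[3]}) : Prop :=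
  forall v : 'I_3 -> K, (exists i, v i != 0) ->
    ~ (F.@[v] = 0 /\ forall i : 'I_3, (mderiv i F).@[v] = 0).

(* Hasse-Witt (Cartier-Manin) matrix of a plane quartic in char 2
   (Stoehr-Voloch): entry (i,j) is the coefficient of F^(p-1) = F at the
   monomial x^(p u_i - u_j), u_i = (1,1,1) + e_i. *)
Definition hw_mono (i j : 'I_3) : 'X_{1..3} :=
  [multinom (1 + 2 * (k == i) - (k == j))%N | k < 3].
Definition hasse_witt (F : {mpoly K[3]}) : 'M[K]_3 :=
  \matrix_(i < 3, j < 3) F@_(hw_mono i j).

(* ordinary: Jacobian has 2-rank 3 = genus, i.e. Hasse-Witt matrix invertible *)
Definition ordinary (F : {mpoly K[3]}) : Prop := hasse_witt F \in unitmx.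

Definition ord_quartic_over_k (q : nat) (F : {mpoly K[3]}) : Prop :=
  [/\ F \is 4.-homog, form_over_k q F, nonsingular F & ordinary F].

(* the line a_0 x + a_1 y + a_2 z = 0 is a bitangent of F = 0:
   F restricted to the line is a square, i.e. F = q^2 mod the linear form *)
Definition bitangent (F : {mpoly K[3]}) (a : 'rV[K]_3) : Prop :=
  exists (qf c : {mpoly K[3]}), qf \is 2.-homog /\ F = qf ^+ 2 + linform a * c.

Definition G0 : {mpoly K[3]} :=
  'X_0 * 'X_1 * 'X_2 * ('X_0 + 'X_1 + 'X_2).

(* equation of C_Q : Q^2 = xyz(x+y+z) (char 2) *)
Definition CQ (Q : {mpoly K[3]}) : {mpoly K[3]} := Q ^+ 2 + G0.

Definition inQset (Q : {mpoly K[3]}) : Prop :=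
  exists a b c d e f : K,
    Q = a *: ('X_0 * 'X_0) + b *: ('X_1 * 'X_1) + c *: ('X_2 * 'X_2)
        + d *: ('X_0 * 'X_1) + e *: ('X_1 * 'X_2) + f *: ('X_2 * 'X_0)
    /\ a * b * c != 0 /\ a + b + d != 0 /\ b + c + e != 0 /\ a + c + f != 0
    /\ a + b + c + d + e + f != 1.

(* Gamma = PGL_3(F_2) = GL_3(F_2), as 0/1 invertible matrices over K *)
Definition inGamma (g : 'M[K]_3) : Prop :=
  g \in unitmx /\ forall i j, g i j = 0 \/ g i j = 1.

Definition isH (g : 'M[K]_3) (H : {mpoly K[3]}) : Prop :=
  subst g G0 = G0 + H ^+ 2.

(* Q in D_gamma : gamma(Q) = Q^(gamma^-1) + H_(gamma^-1) equals sigma Q *)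
Definition inD (q : nat) (g : 'M[K]_3) (Q : {mpoly K[3]}) : Prop :=
  inQset Q /\ exists H, isH (invmx g) H /\ sigmaP q Q = subst (invmx g) Q + H.

(* M in PGL_3(K) induces an isomorphism C:F=0 -> C':F'=0, P |-> M P,
   i.e. F'(M P) is a nonzero multiple of F(P) *)
Definition iso_by (M : 'M[K]_3) (F F' : {mpoly K[3]}) : Prop :=
  M \in unitmx /\ exists lam : K, lam != 0 /\ subst M F' = lam *: F.

(* sigma(phi) o phi^-1 = gamma in PGL_3 *)
Definition cocycle_eq (q : nat) (M g : 'M[K]_3) : Prop :=
  exists c : K, c != 0 /\ sigmaM q M *m invmx M = c *: g.

Definition in_PGL3_k (q : nat) (eta : 'M[K]_3) : Prop :=
  eta \in unitmx /\ forall i j, in_k q (eta i j).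

End Defs.

(* Main.v *)
Require Import Defs.
From HB Require Import structures.
From mathcomp Require Import all_boot all_order all_algebra all_field.
From mathcomp Require Import mpoly.
Import GRing.Theory.
Local Open Scope ring_scope.

Section Aux.
Variable K : fieldType.
Implicit Types (F G : {mpoly K[3]}) (M N : 'M[K]_3).

Lemma substX M (i : 'I_3) : subst M 'X_i = \sum_(j < 3) M i j *: 'X_j.
Proof. by rewrite /subst comp_mpolyXU -tnth_nth tnth_mktuple. Qed.

Lemma substZ M a F : subst M (a *: F) = a *: subst M F.
Proof. exact: comp_mpolyZ. Qed.
Lemma substD M F G : subst M (F + G) = subst M F + subst M G.
Proof. exact: raddfD. Qed.
Lemma substM M F G : subst M (F * G) = subst M F * subst M G.
Proof. exact: rmorphM. Qed.
Lemma substXn M F k : subst M (F ^+ k) = subst M F ^+ k.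
Proof. exact: rmorphXn. Qed.
Lemma subst_sum M (I : Type) (r : seq I) (P : pred I) (f : I -> {mpoly K[3]}) :
  subst M (\sum_(i <- r | P i) f i) = \sum_(i <- r | P i) subst M (f i).
Proof. exact: raddf_sum. Qed.

Lemma substZX M a (i : 'I_3) : subst M (a *: 'X_i) = \sum_(j < 3) (a * M i j) *: 'X_j.
Proof.
rewrite substZ substX scaler_sumr.
by apply: eq_big => // j _; rewrite scalerA.
Qed.

Lemma subst_lin M (b : 'rV[K]_3) : subst M (linform b) = linform (b *m M).
Proof.
rewrite /linform subst_sum.
under eq_bigr => i _ do rewrite substZX.
rewrite exchange_big /=.
by under [RHS]eq_bigr => k _ do rewrite mxE scaler_suml.
Qed.

Lemma subst_comp M N G : subst N (subst M G) = subst (M *m N) G.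
Proof.
rewrite [G]mpolyE (subst_sum M) (subst_sum N) (subst_sum (M *m N)).
apply: eq_bigr => m _.
rewrite !substZ; congr (_ *: _).
rewrite /subst !comp_mpolyX rmorph_prod; apply: eq_big => // i _.
rewrite rmorphXn /=; congr (_ ^+ _); rewrite !tnth_mktuple.
rewrite -/(subst N _) subst_sum.
rewrite (eq_bigr (fun j => \sum_(k < 3) (M i j * N j k) *: 'X_k)); last first.
  by move=> j _; rewrite substZX.
rewrite exchange_big /=.
by under [RHS]eq_bigr => k _ do rewrite mxE scaler_suml.
Qed.

Lemma subst1 G : subst 1%:M G = G.
Proof.
rewrite /subst -[RHS]comp_mpoly_id; congr comp_mpoly.
apply: eq_from_tnth => i; rewrite !tnth_mktuple.
rewrite (bigD1 i) //= mxE eqxx scale1r big1 ?addr0 // => j /negPf ji.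
by rewrite mxE eq_sym ji scale0r.
Qed.

Lemma dhomogX1 (i : 'I_3) : ('X_i : {mpoly K[3]}) \is 1.-homog.
Proof. rewrite dhomogX. apply/eqP; exact: mdeg1. Qed.

Lemma dhomog_prod3 (P : 'I_3 -> {mpoly K[3]}) (D : 'I_3 -> nat) :
  (forall i, P i \is (D i).-homog) -> \prod_i P i \is (\sum_i D i)%N.-homog.
Proof.
move=> h; elim/big_rec2: _ => [|i d p _ hp]; first exact: dhomog1.
exact: dhomogM.
Qed.

Lemma subst_homog M d G : G \is d.-homog -> subst M G \is d.-homog.
Proof.
move=> hG; rewrite /subst comp_mpolyEX big_seq.
apply: rpred_sum => m hm; apply: rpredZ.
rewrite comp_mpolyX.
have -> : d = (\sum_(i < 3) (1 * m i))%N.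
  rewrite -(dhomog_mf hG hm); transitivity (\sum_(i < 3) m i)%N; first exact: mdegE.
  by apply: eq_bigr => i _; rewrite mul1n.
elim/big_rec2: _ => [|i d1 p _ hp]; first exact: dhomog1.
apply: dhomogM => //; apply: dhomogMn; rewrite tnth_mktuple.
apply: rpred_sum => j _; apply: rpredZ; exact: dhomogX1.
Qed.

Lemma bit_subst M F b : bitangent F b -> bitangent (subst M F) (b *m M).
Proof.
case=> qf [c [hq ->]]; exists (subst M qf), (subst M c); split.
  exact: subst_homog.
by rewrite substD substM substXn subst_lin.
Qed.

Lemma bit_rowZ F b mu : mu != 0 -> bitangent F b -> bitangent F (mu *: b).
Proof.
move=> hmu [qf [c [hq ->]]]; exists qf, (mu^-1 *: c); split => //.
congr (_ + _); rewrite /linform.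
have -> : \sum_(j < 3) (mu *: b) 0 j *: 'X_j = mu *: \sum_(j < 3) b 0 j *: ('X_j : {mpoly K[3]}).
  rewrite scaler_sumr; apply: eq_big => // j _; by rewrite mxE scalerA.
by rewrite -scalerAl -scalerAr scalerA divff // scale1r.
Qed.

Lemma bit_rowZ_iff F b mu : mu != 0 -> (bitangent F (mu *: b) <-> bitangent F b).
Proof.
move=> hmu; split; last exact: bit_rowZ.
move=> h; have := @bit_rowZ F (mu *: b) mu^-1 (invr_neq0 hmu) h.
by rewrite scalerA mulVf // scale1r.
Qed.
End Aux.
Arguments subst_comp {K}. Arguments subst1 {K}. Arguments bit_subst {K}.
Arguments dhomogX1 {K}. Arguments bit_rowZ_iff {K}.

Section Closed.
Variable K : closedFieldType.
Implicit Types (F G : {mpoly K[3]}) (M N : 'M[K]_3).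

Lemma closed_root n (a : K) : (0 < n)%N -> exists x : K, x ^+ n = a.
Proof.
case: n => // n hn; have [x hx] := @GRing.solve_monicpoly K n.+1 (nth 0 [:: a]) hn.
exists x; rewrite hx big_ord_recl /= expr0 mulr1 big1 ?addr0 // => i _.
by rewrite nth_nil mul0r.
Qed.

Lemma bit_scale F b (lam : K) : bitangent F b -> bitangent (lam *: F) b.
Proof.
case=> qf [c [hq ->]]; have [s hs] := @closed_root 2 lam isT.
exists (s *: qf), (lam *: c); split; first exact: dhomogZ.
rewrite exprZn hs scalerDr scalerAr.
by rewrite -!scalerAr.
Qed.

Lemma bit_scale_iff F b (lam : K) : lam != 0 ->
  (bitangent (lam *: F) b <-> bitangent F b).
Proof.
move=> hl; split; last exact: bit_scale.
move=> h; have := @bit_scale _ b lam^-1 h.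
by rewrite scalerA mulVf // scale1r.
Qed.

Lemma bit_iso M G F (lam : K) : M \in unitmx -> lam != 0 ->
  subst M G = lam *: F ->
  forall b, bitangent F b <-> bitangent G (b *m invmx M).
Proof.
move=> uM hl hs b; split.
  move=> h; have := bit_subst (invmx M) _ _ (@bit_scale _ _ lam h).
  by rewrite -hs subst_comp mulmxV // subst1.
move=> h; have := bit_subst M _ _ h.
by rewrite hs mulmxKV // bit_scale_iff.
Qed.

Lemma inQ_homog (Q : {mpoly K[3]}) : inQset Q -> Q \is 2.-homog.
Proof.
case=> [a [b [c [d [e [f [-> _]]]]]]].
have hX2 : forall i j : 'I_3, ('X_i * 'X_j : {mpoly K[3]}) \is 2.-homog.
  by move=> i j; exact: (dhomogM (dhomogX1 i) (dhomogX1 j)).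
by do ![apply: rpredD | apply: rpredZ; apply: hX2].
Qed.

Lemma bit_CQ (hchar : (2 \in [pchar K])%N) (Q Q' : {mpoly K[3]}) b :
  inQset Q -> inQset Q' -> bitangent (CQ Q) b -> bitangent (CQ Q') b.
Proof.
move=> hQ hQ' [qf [c [hq hc]]].
have h2 : forall x : {mpoly K[3]}, x + x = 0.
  by move=> x; rewrite -mulr2n -scaler_nat (pcharf0 hchar) scale0r.
have sq : forall x y : {mpoly K[3]}, (x + y) ^+ 2 = x ^+ 2 + y ^+ 2.
  by move=> x y; rewrite sqrrD mulr2n h2 addr0.
exists (Q' + Q + qf), c; split.
  by apply: dhomogD; [apply: dhomogD; apply: inQ_homog|].
have eG : G0 K = Q ^+ 2 + (qf ^+ 2 + linform b * c).
  by rewrite -hc /CQ addrA h2 add0r.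
by rewrite /CQ eG !sq !addrA.
Qed.

End Closed.

Section Frob.
Variable K : closedFieldType.
Variable e : nat.
Hypothesis hchar : (2 \in [pchar K])%N.

Local Notation fr := (frob (K:=K) (2 ^ e)).

Lemma frD (x y : K) : fr (x + y) = fr x + fr y.
Proof.
rewrite /frob exprDn_pchar //.
by rewrite (eq_pnat _ (pcharf_eq hchar)) pnatX pnat_id.
Qed.

Lemma fr0 : fr 0 = 0.
Proof. by rewrite /frob expr0n expn_eq0. Qed.

Lemma frM (x y : K) : fr (x * y) = fr x * fr y.
Proof. by rewrite /frob exprMn. Qed.

Lemma map_frM (A B : 'M[K]_3) : map_mx fr (A *m B) = map_mx fr A *m map_mx fr B.
Proof.
apply/matrixP=> i j; rewrite !mxE (big_morph _ frD fr0).
by apply: eq_bigr => k _; rewrite frM !mxE.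
Qed.

Lemma map_frZ a (A : 'M[K]_3) : map_mx fr (a *: A) = fr a *: map_mx fr A.
Proof. by apply/matrixP=> i j; rewrite !mxE frM. Qed.
End Frob.

Theorem lemma1p4 (K : closedFieldType) (hchar : (2 \in [pchar K])%N)
  (halg : algebraic_over_F2 K) (e : nat) (he : (0 < e)%N)
  (g : 'M[K]_3) (hg : inGamma g)
  (F F' : {mpoly K[3]})
  (hF : ord_quartic_over_k (2 ^ e) F) (hF' : ord_quartic_over_k (2 ^ e) F')
  (Q Q' : {mpoly K[3]}) (hQ : inD (2 ^ e) g Q) (hQ' : inD (2 ^ e) g Q')
  (M M' : 'M[K]_3) (hM : iso_by M F (CQ Q)) (hM' : iso_by M' F' (CQ Q'))
  (hc : cocycle_eq (2 ^ e) M g) (hc' : cocycle_eq (2 ^ e) M' g) :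
  exists eta : 'M[K]_3, in_PGL3_k (2 ^ e) eta /\
    forall a : 'rV[K]_3, a != 0 ->
      (bitangent F' a <-> bitangent F (a *m eta)).
Proof.
move: hM hM' hc hc' => [uM [lam [lam0 hsub]]] [uM' [lam' [lam0' hsub']]].
move=> [c [c0 hcM]] [c' [c0' hcM']].
have ug : g \in unitmx by case: hg.
set A := invmx M' *m M.
have sM : sigmaM (2 ^ e) M = (c *: g) *m M by rewrite -hcM mulmxKV.
have sM' : sigmaM (2 ^ e) M' = (c' *: g) *m M' by rewrite -hcM' mulmxKV.
set U := g *m M'.
have uU : U \in unitmx by rewrite unitmx_mul ug.
have hA : sigmaM (2 ^ e) A = (c / c') *: A.
  have e1 : M' *m A = M by rewrite /A mulKVmx.
  have h : sigmaM (2 ^ e) M' *m sigmaM (2 ^ e) A = sigmaM (2 ^ e) M.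
    by rewrite /sigmaM -map_frM // e1.
  rewrite sM sM' -e1 -!scalemxAl mulmxA -/U in h.
  have h2 : U *m sigmaM (2 ^ e) A = (c / c') *: (U *m A).
    apply: (@scalerI _ _ c'); first by [].
    by rewrite h scalerA mulrC divfK.
  by rewrite -[sigmaM _ A](mulKmx uU) h2 scalemxAr mulKmx.
have q1 : (0 < 2 ^ e - 1)%N.
  by rewrite subn_gt0 -{1}(expn0 2) ltn_exp2l.
have [mu hmu] := @closed_root K _ (c' / c) q1.
have mu0 : mu != 0.
  apply/negP => /eqP m0; move: hmu; rewrite m0 expr0n.
  rewrite (negPf (lt0n_neq0 q1)) => /esym/eqP.
  by rewrite mulf_eq0 invr_eq0 (negPf c0) (negPf c0').
exists (mu *: A); split.
  split; first by rewrite unitmxZ ?unitfE // unitmx_mul unitmx_inv uM' uM.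
  have hE : sigmaM (2 ^ e) (mu *: A) = mu *: A.
    rewrite /sigmaM map_frZ // -/(sigmaM _ A) hA scalerA; congr (_ *: _).
    rewrite /frob.
    have hq : (2 ^ e = (2 ^ e - 1).+1)%N by rewrite subn1 prednK // expn_gt0.
    rewrite hq exprS hmu -mulrA -[c / c']invf_div mulfV ?mulr1 //.
    by rewrite mulf_neq0 // invr_eq0.
  move=> i j; move/matrixP: hE => /(_ i j).
  by rewrite /sigmaM mxE.
move=> a _.
rewrite -scalemxAr bit_rowZ_iff //.
rewrite (@bit_iso K M' _ _ _ uM' lam0' hsub') (@bit_iso K M _ _ _ uM lam0 hsub) /A mulmxA mulmxK //.
case: hQ => hQ _; case: hQ' => hQ' _.
by split; apply: (@bit_CQ K hchar).
Qed.
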